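(* Let $H$ be a finite graph (possibly with loops), and let $c\geq 1$ and $t\geq 0$ be integers. If the exponential graph $\mathcal{E}_c(H)$ admits a proper coloring with $c+t$ colors, then $\mathcal{E}_c(H)$ has a suited $(c+t)$-coloring.
   Context: All graphs have no multiple edges but may have loops. For a finite graph $H$ and integer $c\ge 1$, two maps $\phi_1,\phi_2: V(H)\to[c]$ are co-proper if $\phi_1(u)\neq\phi_2(v)$ whenever $u\sim v$ in $H$ (for a loop at $u$ this includes the pair $u=v$). The exponential graph $\mathcal{E}_c(H)$ has vertex set $[c]^{V(H)}$, two maps $\phi_1,\phi_2$ being adjacent iff they are co-proper (a map co-proper with itself has a loop). A proper $(c+t)$-coloring $\Psi: V(\mathcal{E}_c(H))\to[c+t]$ assigns distinct colors to adjacent maps (so no proper coloring exists if there is a loop). The colors $1,\dots,c$ are called primary and $c+1,\dots,c+t$ secondary. A proper $(c+t)$-coloring $\Psi$ of $\mathcal{E}_c(H)$ is suited if for every $\phi\in V(\mathcal{E}_c(H))$, $\Psi(\phi)\in \operatorname{im}(\phi)\cup\{c+1,\dots,c+t\}$. *)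

(* Defs.v *)
From mathcomp Require Import all_boot.
Set Implicit Arguments. Unset Strict Implicit. Unset Printing Implicit Defensive.

(* H: finite graph on vertex type V with symmetric adjacency relation adj
   (loops allowed: adj u u may hold).  Colours [c] = {1..c} are encoded as 'I_c
   (colour i+1 <-> ordinal i); colours [c+t] as 'I_(c+t), with ordinals < c
   primary and ordinals >= c secondary. *)

Definition expmap (V : finType) (c : nat) := {ffun V -> 'I_c}.

Definition coproper (V : finType) (adj : rel V) (c : nat)
  (phi1 phi2 : expmap V c) : Prop :=
  forall u v : V, adj u v -> phi1 u <> phi2 v.

Definition proper_coloring (V : finType) (adj : rel V) (c t : nat)
  (Psi : expmap V c -> 'I_(c + t)) : Prop :=
  forall phi1 phi2 : expmap V c, coproper adj phi1 phi2 -> Psi phi1 <> Psi phi2.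

Definition suited (V : finType) (c t : nat)
  (Psi : expmap V c -> 'I_(c + t)) : Prop :=
  forall phi : expmap V c,
    c <= nat_of_ord (Psi phi) \/ exists v : V, nat_of_ord (phi v) = nat_of_ord (Psi phi).

(* Main.v *)
Require Import Defs.
From mathcomp Require Import all_boot all_fingroup.
Set Implicit Arguments. Unset Strict Implicit.

Section S.
Variables (V : finType) (adj : rel V) (c t : nat).

Definition cst (i : 'I_c) : expmap V c := [ffun _ => i].

Lemma edge_ex (hc : 0 < c) (Psi : expmap V c -> 'I_(c + t)) :
  proper_coloring adj Psi -> exists u v, adj u v.
Proof.
move=> pr; case: (boolP [exists u, exists v, adj u v]).
  by move=> /existsP [u /existsP [v h]]; exists u, v.
move=> /existsPn h; exfalso.
apply: (pr (cst (Ordinal hc)) (cst (Ordinal hc))) => // u v huv.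
by move: (h u) => /existsPn /(_ v); rewrite huv.
Qed.

Lemma cst_inj (hc : 0 < c) (Psi : expmap V c -> 'I_(c + t)) :
  proper_coloring adj Psi -> forall i j, i != j -> Psi (cst i) != Psi (cst j).
Proof.
move=> pr i j hij; have [u [v huv]] := edge_ex hc pr.
apply/eqP; apply: pr => u' v' _; rewrite !ffunE; exact/eqP.
Qed.

Lemma step (hc : 0 < c) : forall k, k <= c ->
  (exists Psi : expmap V c -> 'I_(c + t), proper_coloring adj Psi) ->
  exists Psi : expmap V c -> 'I_(c + t), proper_coloring adj Psi /\
    forall i : 'I_c, i < k -> val (Psi (cst i)) = val i.
Proof.
elim=> [|k IH] hk ex.
  by case: ex => Psi pr; exists Psi; split.
have [Psi [pr H]] := IH (ltnW hk) ex.
set k' : 'I_c := Ordinal hk.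
set a := Psi (cst k'); set b : 'I_(c + t) := lshift t k'.
exists (fun phi => tperm a b (Psi phi)); split.
  move=> p1 p2 hp /perm_inj; exact: pr.
move=> i; rewrite ltnS leq_eqVlt => /orP [/eqP ik|ik].
  have -> : i = k' by apply: val_inj.
  by rewrite tpermL.
rewrite tpermD //; first exact: H.
  have ne : i != k'.
    by apply/eqP => /(congr1 val) /= ie; rewrite ie ltnn in ik.
  apply/negP => /eqP e; have := cst_inj hc pr ne.
  by rewrite -/a e eqxx.
apply/negP => /eqP /(congr1 val); rewrite H //= => ie.
by rewrite ie ltnn in ik.
Qed.
End S.

Theorem lemma3 (V : finType) (adj : rel V) (adj_sym : symmetric adj) (c t : nat)
  (hc : 1 <= c) :
  (exists Psi : expmap V c -> 'I_(c + t), proper_coloring adj Psi) ->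
  exists Psi : expmap V c -> 'I_(c + t), proper_coloring adj Psi /\ suited Psi.
Proof.
move=> ex; have [Psi [pr H]] := step hc (leqnn c) ex.
exists Psi; split => // phi.
case: (leqP c (Psi phi)) => hP; [by left | right].
case: (boolP [exists v, val (phi v) == val (Psi phi)]).
  by move=> /existsP [v /eqP e]; exists v.
move=> /existsPn hn; exfalso.
set i : 'I_c := Ordinal hP.
apply: (pr (cst V i) phi).
  move=> u v _; rewrite ffunE => e.
  by move: (hn v); rewrite -e /= eqxx.
by apply: val_inj; rewrite H.
Qed.
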